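(* If $G$ is a special grid operator and $k\in\mathbb Z$, then $G'=\sigma^kG\sigma^k$ is a special grid operator and moreover $G'^{\bullet}=(-\tau)^kG^\bullet\tau^k$.
   Context: Let $\omega=e^{i\pi/4}$, $\lambda=1+\sqrt2$, and $\mathbb Z[\omega]=\{a_0+a_1\omega+a_2\omega^2+a_3\omega^3: a_j\in\mathbb Z\}\subseteq\mathbb C\cong\mathbb R^2$. A grid operator is a real linear map $G:\mathbb R^2\to\mathbb R^2$ with $G(\mathbb Z[\omega])\subseteq\mathbb Z[\omega]$ (its entries lie in $\mathbb Q(\sqrt2)$); it is special if $\det G=\pm1$. For a matrix $M$ with entries in $\mathbb Q(\sqrt2)$, $M^\bullet$ is obtained by applying $(x+y\sqrt2)^\bullet=x-y\sqrt2$ to each entry. Let $\sigma=\sqrt{\lambda^{-1}}\begin{bmatrix}\lambda&0\\0&1\end{bmatrix}$ and $\tau=\sqrt{\lambda^{-1}}\begin{bmatrix}1&0\\0&-\lambda\end{bmatrix}$. *)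

(* Defs.v *)
From HB Require Import structures.
From mathcomp Require Import all_boot all_order all_algebra.
From mathcomp Require Import boolp.
Set Implicit Arguments. Unset Strict Implicit. Unset Printing Implicit Defensive.
Import Order.TTheory GRing.Theory Num.Theory.
Local Open Scope ring_scope.

Section GridDefs.
Variable R : rcfType.

Definition sqrt2 : R := Num.sqrt 2.
Definition lam : R := 1 + sqrt2.

(* the column vector (x, y) in R^2, identified with x + i y in C *)
Definition vec2 (x y : R) : 'cV[R]_2 := \col_(i < 2) (if i == ord0 then x else y).

(* omega^j for j = 0..3, with omega = e^{i pi/4} = (sqrt2/2, sqrt2/2) *)
Definition om0 : 'cV[R]_2 := vec2 1 0.
Definition om1 : 'cV[R]_2 := vec2 (sqrt2 / 2) (sqrt2 / 2).
Definition om2 : 'cV[R]_2 := vec2 0 1.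
Definition om3 : 'cV[R]_2 := vec2 (- (sqrt2 / 2)) (sqrt2 / 2).

Definition inZomega (v : 'cV[R]_2) : Prop :=
  exists a0 a1 a2 a3 : int,
    v = a0%:~R *: om0 + a1%:~R *: om1 + a2%:~R *: om2 + a3%:~R *: om3.

Definition grid_op (G : 'M[R]_2) : Prop :=
  forall v, inZomega v -> inZomega (G *m v).

Definition special_grid_op (G : 'M[R]_2) : Prop :=
  grid_op G /\ (\det G = 1 \/ \det G = -1).

(* conjugation (x + y sqrt2)^bullet = x - y sqrt2 on Q(sqrt2);
   (arbitrarily the identity outside Q(sqrt2), never used there) *)
Definition conj2 (x : R) : R :=
  match pselect (exists p : rat * rat, x = ratr p.1 + ratr p.2 * sqrt2) with
  | left H => let p := proj1_sig (cid H) in ratr p.1 - ratr p.2 * sqrt2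
  | right _ => x
  end.

Definition bullet (M : 'M[R]_2) : 'M[R]_2 := map_mx conj2 M.

Definition diag2 (a b : R) : 'M[R]_2 :=
  \matrix_(i < 2, j < 2) (if i == j then (if i == ord0 then a else b) else 0).

Definition sigma : 'M[R]_2 := Num.sqrt (lam^-1) *: diag2 lam 1.
Definition tau : 'M[R]_2 := Num.sqrt (lam^-1) *: diag2 1 (- lam).

End GridDefs.

(* Main.v *)
Require Import Defs.
From HB Require Import structures.
From mathcomp Require Import all_boot all_order all_algebra.
From mathcomp Require Import boolp ring lra zify.
Set Implicit Arguments. Unset Strict Implicit. Unset Printing Implicit Defensive.
Import Order.TTheory GRing.Theory Num.Theory.
Local Open Scope ring_scope.

Lemma nat_sq2 (a b : nat) : (0 < b)%N -> (a * a <> 2 * (b * b))%N.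
Proof.
move=> b0 e.
have a0 : (0 < a)%N.
  case: a e => //= e; move: e; rewrite muln0; lia.
have := congr1 (logn 2) e.
rewrite !lognM ?muln_gt0 ?a0 ?b0 // (logn_prime 2 (isT : prime 2)) /=.
lia.
Qed.

Lemma rat_sq2 (r : rat) : r * r <> 2.
Proof.
move=> h.
set n := numq r; set d := denq r.
have d0 : d != 0 by rewrite gt_eqF // denq_gt0.
have e : n * n = 2 * (d * d).
  apply: (@intr_inj rat). rewrite !rmorphM /=.
  have := divq_num_den r; rewrite -/n -/d => er.
  have d0' : (d%:~R : rat) != 0 by rewrite intr_eq0.
  rewrite -er in h.
  have -> : (2%:~R : rat) = 2 by [].
  by rewrite -h; field.
have := congr1 absz e; rewrite !abszM /=.
apply: nat_sq2.
by rewrite absz_gt0.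
Qed.

Section Aux.
Variable R : rcfType.
Local Notation s2 := (sqrt2 R).
Local Notation lam := (lam R).

Lemma s2sq : s2 * s2 = 2.
Proof. by rewrite /sqrt2 -expr2 sqr_sqrtr // ler0n. Qed.

Lemma s2pos : 0 < s2.
Proof. by rewrite /sqrt2 sqrtr_gt0 ltr0n. Qed.

Lemma lam_neq0 : lam != 0.
Proof. have h : 0 < 1 + s2 by have := s2pos; lra. by rewrite /Defs.lam gt_eqF. Qed.

Lemma lamV : lam^-1 = s2 - 1.
Proof. apply: mulr1_eq; rewrite /Defs.lam; have := s2sq; lra. Qed.

Definition dsel (a b : R) (i : 'I_2) := if i == ord0 then a else b.

Lemma diag2E (a b : R) i j : diag2 a b i j = if i == j then dsel a b i else 0.
Proof. by rewrite /diag2 mxE. Qed.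

Lemma ord2P (i : 'I_2) : i = ord0 \/ i = ord_max.
Proof. by case: i => [[|[|//]]] Hi; [left|right]; apply/val_inj. Qed.

Lemma sum2 (f : 'I_2 -> R) : \sum_i f i = f ord0 + f ord_max.
Proof.
rewrite big_ord_recr big_ord1 /=; congr (f _ + _); exact/val_inj.
Qed.

Lemma diag2_mulE a b (M : 'M[R]_2) i j :
  (diag2 a b * M) i j = dsel a b i * M i j.
Proof.
rewrite -mulmxE mxE sum2 !diag2E.
by case: (ord2P i) => ->; rewrite /dsel /=; ring.
Qed.

Lemma mul_diag2E a b (M : 'M[R]_2) i j :
  (M * diag2 a b) i j = M i j * dsel a b j.
Proof.
rewrite -mulmxE mxE sum2 !diag2E.
by case: (ord2P j) => ->; rewrite /dsel /=; ring.
Qed.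

Lemma diag2M (a b c d : R) : diag2 a b * diag2 c d = diag2 (a * c) (b * d).
Proof.
apply/matrixP => i j; rewrite diag2_mulE !diag2E.
by case: (ord2P i) => ->; case: (ord2P j) => ->; rewrite /dsel /=; ring.
Qed.

Lemma diag2_1 : diag2 1 1 = 1 :> 'M[R]_2.
Proof.
apply/matrixP => i j; rewrite diag2E !mxE /dsel.
by case: (ord2P i) => ->; case: (ord2P j) => ->.
Qed.

Lemma diag2X (a b : R) (n : nat) : diag2 a b ^+ n = diag2 (a ^+ n) (b ^+ n).
Proof.
elim: n => [|n IH]; first by rewrite !expr0 diag2_1.
by rewrite exprS IH diag2M -!exprS.
Qed.

Lemma diag2V (a b : R) : a != 0 -> b != 0 -> (diag2 a b)^-1 = diag2 a^-1 b^-1.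
Proof.
move=> a0 b0.
have h1 : diag2 a b * diag2 a^-1 b^-1 = 1 by rewrite diag2M !divff // diag2_1.
have h2 : diag2 a^-1 b^-1 * diag2 a b = 1 by rewrite diag2M !mulVf // diag2_1.
have u : diag2 a b \is a GRing.unit by apply/unitrP; exists (diag2 a^-1 b^-1).
by rewrite -[RHS]mul1r -(mulVr u) -mulrA h1 mulr1.
Qed.

Lemma diag2Z (a b : R) (k : int) : a != 0 -> b != 0 ->
  diag2 a b ^ k = diag2 (a ^ k) (b ^ k).
Proof.
move=> a0 b0; case: k => n.
  by rewrite -!exprnP diag2X.
by rewrite NegzE -!exprnN diag2X diag2V ?expf_neq0.
Qed.

Lemma det_diag2 (a b : R) : \det (diag2 a b) = a * b.
Proof.
have -> : diag2 a b = diag_mx (\row_i dsel a b i).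
  apply/matrixP => i j; rewrite diag2E !mxE.
  by case: (i == j).
by rewrite det_diag big_ord_recr big_ord1 !mxE.
Qed.


Lemma vec2E (x y : R) i j : vec2 x y i j = dsel x y i.
Proof. by rewrite /vec2 mxE. Qed.

Lemma vec2P (x y x' y' : R) : x = x' -> y = y' -> vec2 x y = vec2 x' y'.
Proof. by move=> -> ->. Qed.

Lemma vec2_add (x y x' y' : R) : vec2 x y + vec2 x' y' = vec2 (x + x') (y + y').
Proof.
apply/matrixP => i j; rewrite !mxE /dsel; by case: (i == ord0).
Qed.

Lemma vec2_scale (c x y : R) : c *: vec2 x y = vec2 (c * x) (c * y).
Proof.
apply/matrixP => i j; rewrite !mxE /dsel; by case: (i == ord0).
Qed.

Lemma diag2_vec2 (a b x y : R) : diag2 a b *m vec2 x y = vec2 (a * x) (b * y).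
Proof.
apply/matrixP => i j; rewrite mxE sum2 !diag2E !vec2E.
by case: (ord2P i) => ->; rewrite /dsel /=; ring.
Qed.

Lemma inZE (v : 'cV[R]_2) : inZomega v <-> exists a0 a1 a2 a3 : int,
  v = vec2 (a0%:~R + (a1%:~R - a3%:~R) * (s2 / 2))
           (a2%:~R + (a1%:~R + a3%:~R) * (s2 / 2)).
Proof.
have e : forall a0 a1 a2 a3 : int,
  a0%:~R *: om0 R + a1%:~R *: om1 R + a2%:~R *: om2 R + a3%:~R *: om3 R =
  vec2 (a0%:~R + (a1%:~R - a3%:~R) * (s2 / 2))
           (a2%:~R + (a1%:~R + a3%:~R) * (s2 / 2)).
  move=> a0 a1 a2 a3; rewrite /om0 /om1 /om2 /om3 !vec2_scale !vec2_add.
  by apply: vec2P; ring.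
split=> [[a0 [a1 [a2 [a3 ->]]]]|[a0 [a1 [a2 [a3 ->]]]]];
  exists a0, a1, a2, a3; by rewrite e.
Qed.

Lemma inZ_vec2 (a0 a1 a2 a3 : int) (x y : R) :
  x = a0%:~R + (a1%:~R - a3%:~R) * (s2 / 2) ->
  y = a2%:~R + (a1%:~R + a3%:~R) * (s2 / 2) -> inZomega (vec2 x y).
Proof. by move=> -> ->; apply/inZE; exists a0, a1, a2, a3. Qed.

Lemma inZD (u v : 'cV[R]_2) : inZomega u -> inZomega v -> inZomega (u + v).
Proof.
move=> /inZE [a0 [a1 [a2 [a3 ->]]]] /inZE [b0 [b1 [b2 [b3 ->]]]].
rewrite vec2_add; eapply (@inZ_vec2 (a0 + b0) (a1 + b1) (a2 + b2) (a3 + b3));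
  rewrite !intrD; ring.
Qed.

Lemma inZZ (z : int) (v : 'cV[R]_2) : inZomega v -> inZomega (z%:~R *: v).
Proof.
move=> /inZE [a0 [a1 [a2 [a3 ->]]]].
rewrite vec2_scale; eapply (@inZ_vec2 (z * a0) (z * a1) (z * a2) (z * a3));
  rewrite !intrM; ring.
Qed.

Lemma grid_gen (M : 'M[R]_2) :
  inZomega (M *m om0 R) -> inZomega (M *m om1 R) ->
  inZomega (M *m om2 R) -> inZomega (M *m om3 R) -> grid_op M.
Proof.
move=> h0 h1 h2 h3 v [a0 [a1 [a2 [a3 ->]]]].
rewrite !mulmxDr -!scalemxAr.
by apply: inZD; [apply: inZD; [apply: inZD|]|]; apply: inZZ.
Qed.

Lemma grid_mul (A B : 'M[R]_2) : grid_op A -> grid_op B -> grid_op (A * B).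
Proof. by move=> hA hB v hv; rewrite -mulmxE -mulmxA; apply/hA/hB. Qed.

Lemma grid_1 : grid_op (1 : 'M[R]_2).
Proof. by move=> v hv; rewrite -[1]/(1%:M) mul1mx. Qed.

Lemma grid_X (A : 'M[R]_2) n : grid_op A -> grid_op (A ^+ n).
Proof.
move=> hA; elim: n => [|n IH]; first by rewrite expr0; exact: grid_1.
by rewrite exprS; apply: grid_mul.
Qed.

Lemma grid_lam1 : grid_op (diag2 lam 1).
Proof.
have h := s2sq.
apply: grid_gen; rewrite /om0 /om1 /om2 /om3 diag2_vec2 /Defs.lam.
- by eapply (@inZ_vec2 (1)%Z (1)%Z (0)%Z (-1)%Z); field: h.
- by eapply (@inZ_vec2 (1)%Z (1)%Z (0)%Z (0)%Z); field: h.
- by eapply (@inZ_vec2 (0)%Z (0)%Z (1)%Z (0)%Z); field: h.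
- by eapply (@inZ_vec2 (-1)%Z (0)%Z (0)%Z (1)%Z); field: h.
Qed.

Lemma grid_lamV1 : grid_op (diag2 (s2 - 1) 1).
Proof.
have h := s2sq.
apply: grid_gen; rewrite /om0 /om1 /om2 /om3 diag2_vec2 /Defs.lam.
- by eapply (@inZ_vec2 (-1)%Z (1)%Z (0)%Z (-1)%Z); field: h.
- by eapply (@inZ_vec2 (1)%Z (0)%Z (0)%Z (1)%Z); field: h.
- by eapply (@inZ_vec2 (0)%Z (0)%Z (1)%Z (0)%Z); field: h.
- by eapply (@inZ_vec2 (-1)%Z (1)%Z (0)%Z (0)%Z); field: h.
Qed.

Lemma grid_1lam : grid_op (diag2 1 lam).
Proof.
have h := s2sq.
apply: grid_gen; rewrite /om0 /om1 /om2 /om3 diag2_vec2 /Defs.lam.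
- by eapply (@inZ_vec2 (1)%Z (0)%Z (0)%Z (0)%Z); field: h.
- by eapply (@inZ_vec2 (0)%Z (1)%Z (1)%Z (0)%Z); field: h.
- by eapply (@inZ_vec2 (0)%Z (1)%Z (1)%Z (1)%Z); field: h.
- by eapply (@inZ_vec2 (0)%Z (0)%Z (1)%Z (1)%Z); field: h.
Qed.

Lemma grid_1lamV : grid_op (diag2 1 (s2 - 1)).
Proof.
have h := s2sq.
apply: grid_gen; rewrite /om0 /om1 /om2 /om3 diag2_vec2 /Defs.lam.
- by eapply (@inZ_vec2 (1)%Z (0)%Z (0)%Z (0)%Z); field: h.
- by eapply (@inZ_vec2 (0)%Z (0)%Z (1)%Z (-1)%Z); field: h.
- by eapply (@inZ_vec2 (0)%Z (1)%Z (-1)%Z (1)%Z); field: h.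
- by eapply (@inZ_vec2 (0)%Z (-1)%Z (1)%Z (0)%Z); field: h.
Qed.


Definition inQ2 (x : R) := exists p q : rat, x = ratr p + ratr q * s2.

Lemma Q2_uniq p q p' q' : ratr p + ratr q * s2 = ratr p' + ratr q' * s2 ->
  p = p' /\ q = q'.
Proof.
move=> e.
have [hq|hq] := eqVneq q q'.
  subst q'; split=> //; apply: (fmorph_inj (@ratr R)); exact: addIr e.
exfalso.
have nz : ratr q' - ratr q != 0 :> R.
  by rewrite -rmorphB fmorph_eq0 subr_eq0 eq_sym.
have hr : ratr ((p - p') / (q' - q)) = s2.
  rewrite fmorph_div rmorphB rmorphB /=.
  apply: (mulIf nz); rewrite mulfVK //; move: e.
  move: (ratr p : R) (ratr p' : R) (ratr q : R) (ratr q' : R) => a b c d e.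
  have ea : a = b + d * s2 - c * s2 by rewrite -e addrK.
  rewrite ea; ring.
apply: (@rat_sq2 ((p - p') / (q' - q))).
apply: (fmorph_inj (@ratr R)).
by rewrite rmorphM /= hr s2sq rmorph_nat.
Qed.


Lemma Q2_rat_s2 (a b : rat) : inQ2 (ratr a + ratr b * s2).
Proof. by exists a, b. Qed.

Lemma conj2E p q : conj2 (ratr p + ratr q * s2) = ratr p - ratr q * s2.
Proof.
rewrite /conj2; case: pselect => [H|H]; last first.
  by exfalso; apply: H; exists (p, q).
case: (cid H) => [[p' q']] /= e.
by case: (Q2_uniq e) => -> ->.
Qed.

Lemma Q2M x y : inQ2 x -> inQ2 y ->
  inQ2 (x * y) /\ conj2 (x * y) = conj2 x * conj2 y.
Proof.
move=> [p [q ->]] [p' [q' ->]].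
have e : (ratr p + ratr q * s2) * (ratr p' + ratr q' * s2) =
   ratr (p * p' + 2 * q * q') + ratr (p * q' + q * p') * s2 :> R.
  rewrite !rmorphD !rmorphM /= rmorph_nat.
  have h := s2sq; move: (ratr p : R) (ratr p' : R) (ratr q : R) (ratr q' : R) => a b c d.
  by field: h.
split; first by rewrite e; apply: Q2_rat_s2.
rewrite e !conj2E !rmorphD !rmorphM /= rmorph_nat.
have h := s2sq; move: (ratr p : R) (ratr p' : R) (ratr q : R) (ratr q' : R) => a b c d.
by field: h.
Qed.

Lemma Q2_1 : inQ2 1 /\ conj2 (1 : R) = 1.
Proof.
have e : (1 : R) = ratr 1 + ratr 0 * s2 by rewrite rmorph1 rmorph0 mul0r addr0.
split; first by rewrite {1}e; apply: Q2_rat_s2.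
by rewrite {1}e conj2E rmorph1 rmorph0 mul0r subr0.
Qed.

Lemma Q2X x n : inQ2 x -> inQ2 (x ^+ n) /\ conj2 (x ^+ n) = conj2 x ^+ n.
Proof.
move=> hx; elim: n => [|n [h1 h2]]; first by rewrite !expr0; exact: Q2_1.
rewrite !exprS; have [h3 h4] := Q2M hx h1.
by split=> //; rewrite h4 h2.
Qed.

Lemma Q2Z x (k : int) : inQ2 x -> inQ2 x^-1 -> x != 0 ->
  inQ2 (x ^ k) /\ conj2 (x ^ k) = conj2 x ^ k.
Proof.
move=> hx hxi x0.
have cV : conj2 x^-1 = (conj2 x)^-1.
  have [_ e] := Q2M hx hxi; rewrite mulfV // (proj2 Q2_1) in e.
  by rewrite (mulr1_eq (esym e)).
case: k => n; first by rewrite -!exprnP; exact: Q2X.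
rewrite NegzE -!exprnN -!exprVn -cV; exact: Q2X.
Qed.



Lemma grid_lamk (k : int) : grid_op (diag2 (lam ^ k) 1).
Proof.
case: k => n.
  by rewrite -exprnP -[1](expr1n _ n) -diag2X; apply: grid_X; exact: grid_lam1.
rewrite NegzE -exprnN -exprVn lamV -[X in diag2 _ X](expr1n _ n.+1) -diag2X.
by apply: grid_X; exact: grid_lamV1.
Qed.

Lemma grid_1lamVk (k : int) : grid_op (diag2 1 (lam^-1 ^ k)).
Proof.
case: k => n.
  by rewrite -exprnP lamV -[X in diag2 X _](expr1n _ n) -diag2X; apply: grid_X; exact: grid_1lamV.
rewrite NegzE -exprnN -exprVn invrK -[1](expr1n _ n.+1) -diag2X.
by apply: grid_X; exact: grid_1lam.
Qed.

Lemma mx_vec2 (M : 'M[R]_2) x y : M *m vec2 x y =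
  vec2 (M ord0 ord0 * x + M ord0 ord_max * y) (M ord_max ord0 * x + M ord_max ord_max * y).
Proof.
apply/matrixP => i j; rewrite mxE sum2 !vec2E.
by case: (ord2P i) => ->; rewrite /dsel /=.
Qed.

Lemma inZ_Q2 x y : inZomega (vec2 x y) -> inQ2 x /\ inQ2 y.
Proof.
move=> /inZE [a0 [a1 [a2 [a3 e]]]].
have ex := congr1 (fun w : 'cV[R]_2 => w ord0 ord0) e.
have ey := congr1 (fun w : 'cV[R]_2 => w ord_max ord0) e.
rewrite /= !vec2E /dsel /= in ex ey.
split.
  exists (a0%:~R), ((a1%:~R - a3%:~R) / 2).
  by rewrite ex fmorph_div rmorphB /= !ratr_int (rmorph_nat _ 2); field.
exists (a2%:~R), ((a1%:~R + a3%:~R) / 2).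
by rewrite ey fmorph_div rmorphD /= !ratr_int (rmorph_nat _ 2); field.
Qed.

Lemma grid_Q2 (G : 'M[R]_2) : grid_op G -> forall i j, inQ2 (G i j).
Proof.
move=> hG.
have i0 : inZomega (om0 R) by rewrite /om0; eapply (@inZ_vec2 1 0 0 0); ring.
have i2 : inZomega (om2 R) by rewrite /om2; eapply (@inZ_vec2 0 0 1 0); ring.
have := hG _ i0; have := hG _ i2; rewrite /om0 /om2 !mx_vec2.
rewrite !mulr1 !mulr0 !addr0 !add0r => /inZ_Q2 [h01 h11] /inZ_Q2 [h00 h10].
by move=> i j; case: (ord2P i) => ->; case: (ord2P j) => ->.
Qed.


Lemma conj2M x y : inQ2 x -> inQ2 y -> conj2 (x * y) = conj2 x * conj2 y.
Proof. by move=> hx hy; case: (Q2M hx hy). Qed.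

Lemma inQ2M x y : inQ2 x -> inQ2 y -> inQ2 (x * y).
Proof. by move=> hx hy; case: (Q2M hx hy). Qed.

Lemma ratrN1 : ratr (-1) = -1 :> R.
Proof. by rewrite rmorphN rmorph1. Qed.

Lemma lam_rat : lam = ratr 1 + ratr 1 * s2.
Proof. by rewrite rmorph1 mul1r. Qed.

Lemma lamV_rat : lam^-1 = ratr (-1) + ratr 1 * s2.
Proof. by rewrite lamV ratrN1 rmorph1 mul1r addrC. Qed.

Lemma Q2_lamk (k : int) : inQ2 (lam ^ k) /\ conj2 (lam ^ k) = (1 - s2) ^ k.
Proof.
have h1 : inQ2 lam by rewrite lam_rat; apply: Q2_rat_s2.
have h2 : inQ2 lam^-1 by rewrite lamV_rat; apply: Q2_rat_s2.
have [h3 h4] := Q2Z k h1 h2 lam_neq0.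
by split=> //; rewrite h4 lam_rat conj2E rmorph1 mul1r.
Qed.

Lemma Q2_lamVk (k : int) : inQ2 (lam^-1 ^ k) /\ conj2 (lam^-1 ^ k) = (- 1 - s2) ^ k.
Proof.
have h1 : inQ2 lam by rewrite lam_rat; apply: Q2_rat_s2.
have h2 : inQ2 lam^-1 by rewrite lamV_rat; apply: Q2_rat_s2.
have [h3 h4] := Q2Z k h2 (eq_ind_r inQ2 h1 (invrK lam)) (invr_neq0 lam_neq0).
by split=> //; rewrite h4 lamV_rat conj2E ratrN1 rmorph1 mul1r.
Qed.

Lemma scale_diag2 (c a b : R) : c *: diag2 a b = diag2 (c * a) (c * b).
Proof.
apply/matrixP => i j; rewrite !mxE /dsel.
by case: (i == j); case: (i == ord0); rewrite ?mulr0.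
Qed.

Lemma opp_diag2 (a b : R) : - diag2 a b = diag2 (- a) (- b).
Proof.
apply/matrixP => i j; rewrite !mxE /dsel.
by case: (i == j); case: (i == ord0); rewrite ?oppr0.
Qed.

Lemma main (G : 'M[R]_2) (k : int) :
  special_grid_op G ->
  special_grid_op ((sigma R) ^ k * G * (sigma R) ^ k) /\
  bullet ((sigma R) ^ k * G * (sigma R) ^ k)
    = (- tau R) ^ k * bullet G * (tau R) ^ k.
Proof.
move=> [hG hdet].
have h := s2sq.
have lpos : 0 < lam^-1 by rewrite lamV; have := s2pos; nra.
set sq := Num.sqrt (lam^-1).
have hsq : sq * sq = s2 - 1.
  by rewrite /sq -expr2 sqr_sqrtr ?lamV //; apply: ltW; rewrite -lamV.
have sq0 : sq != 0 by rewrite /sq sqrtr_eq0 -ltNge.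
have l0 := lam_neq0.
have esig : sigma R = diag2 (sq * lam) sq by rewrite /sigma scale_diag2 mulr1.
have etau : tau R = diag2 sq (sq * - lam) by rewrite /tau scale_diag2 mulr1.
have emtau : - tau R = diag2 (- sq) (- (sq * - lam)) by rewrite etau opp_diag2.
rewrite emtau etau esig !diag2Z ?oppr_eq0 ?mulf_neq0 ?oppr_eq0 //.
set u := (sq * lam) ^ k; set v := sq ^ k.
have huu : u * u = lam ^ k.
  rewrite -expfzMl; congr (_ ^ k); move: hsq; rewrite /Defs.lam => hsq; ring: hsq h.
have huv : u * v = 1.
  rewrite -expfzMl (_ : sq * lam * sq = 1 :> R) ?exp1rz //.
  by move: hsq; rewrite /Defs.lam => hsq; ring: hsq h.
have hvv : v * v = lam^-1 ^ k.
  by rewrite -expfzMl lamV hsq.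
have hll : lam ^ k * lam^-1 ^ k = 1 by rewrite -expfzMl mulfV // exp1rz.
have hG' : diag2 u v * G * diag2 u v = diag2 (lam ^ k) 1 * G * diag2 1 (lam^-1 ^ k).
  apply/matrixP => i j; rewrite !mul_diag2E !diag2_mulE.
  case: (ord2P i) => ->; case: (ord2P j) => ->; rewrite /dsel /=.
  - by rewrite mulrAC huu mulr1.
  - by rewrite mulrAC huv mul1r mulrAC hll mul1r.
  - by rewrite mulrAC (mulrC v) huv !mul1r mulr1.
  - by rewrite mulrAC hvv mul1r mulrC.
rewrite hG'; split; first split.
- by apply: grid_mul; [apply: grid_mul; [apply: grid_lamk|]|apply: grid_1lamVk].
- by rewrite -!mulmxE !det_mulmx !det_diag2 mulr1 mul1r mulrAC hll mul1r.
have qG := grid_Q2 hG.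
have [ql1 ql2] := Q2_lamk k; have [qv1 qv2] := Q2_lamVk k; have [q11 q12] := Q2_1.
apply/matrixP => i j; rewrite /bullet mxE !mul_diag2E !diag2_mulE mxE.
case: (ord2P i) => ->; case: (ord2P j) => ->; rewrite /dsel /=.
- rewrite (conj2M (inQ2M ql1 (qG _ _)) q11) (conj2M ql1 (qG _ _)).
  rewrite (_ : conj2 (lam ^ k) = (1 - s2) ^ k); last exact: ql2.
  rewrite (_ : conj2 (1 : R) = 1); last exact: q12.
  rewrite mulr1 [RHS]mulrAC -expfzMl.
  by congr (_ ^ k * _); ring: hsq.
- rewrite (conj2M (inQ2M ql1 (qG _ _)) qv1) (conj2M ql1 (qG _ _)).
  rewrite (_ : conj2 (lam ^ k) = (1 - s2) ^ k); last exact: ql2. rewrite (_ : conj2 (lam^-1 ^ k) = (-1 - s2) ^ k); last exact: qv2.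
  rewrite [LHS]mulrAC [RHS]mulrAC -!expfzMl.
  by congr (_ ^ k * _); move: hsq; rewrite /Defs.lam => hsq; ring: hsq h.
- rewrite mul1r mulr1 [RHS]mulrAC -expfzMl (_ : - (sq * - lam) * sq = 1 :> R) ?exp1rz ?mul1r //.
  by move: hsq; rewrite /Defs.lam => hsq; ring: hsq h.
- rewrite mul1r (conj2M (qG _ _) qv1).
  rewrite (_ : conj2 (lam^-1 ^ k) = (-1 - s2) ^ k); last exact: qv2.
  rewrite [LHS]mulrC [RHS]mulrAC -expfzMl.
  by congr (_ ^ k * _); move: hsq; rewrite /Defs.lam => hsq; ring: hsq h.
Qed.


End Aux.

Theorem lemma5p43 (R : rcfType) (G : 'M[R]_2) (k : int) :
  special_grid_op G ->
  special_grid_op ((sigma R) ^ k * G * (sigma R) ^ k) /\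
  bullet ((sigma R) ^ k * G * (sigma R) ^ k)
    = (- tau R) ^ k * bullet G * (tau R) ^ k.
Proof. by move=> hG; apply: main. Qed.
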